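(* For all integers $n\ge3$ and $0\le m<n$, one has $L_e\le e_{n,m}\le U_e$, where \[ L_e=\frac{n-m+2}{n+m}e_{n-1,m-1}+\frac{n-m-2}{n-m}e_{n-1,m+1}+\frac{n-m-4}{n-m-2}\Bigl(\frac{2}{n-m}e_{n-2,m+2}+\frac{2}{n+m}e_{n-3,m+1}\Bigr), \] \[ U_e=\frac{n-m+2}{n+m}e_{n-1,m-1}+\frac{n-m-2}{n-m}e_{n-1,m+1}+\frac{2}{n-m}e_{n-2,m+2}+\frac{2}{n+m}e_{n-3,m+1}+\frac{4}{(n+m)(n+m-2)}e_{n-3,m-1}. \] Furthermore $U_e\le U_d\le d_{n,m}$, where $U_d$ is the expression $U_e$ with every $e$ replaced by $d$.
   Context: Define $c_{n,m}$ for integers $n,m\ge0$ by $c_{n,0}=1$ ($n\ge0$), $c_{n,m}=0$ ($n<m$), and $c_{n,m}=c_{n,m-1}+(m+1)c_{n-1,m}-(m-1)c_{n-2,m-1}$ for $n\ge m\ge1$ (the last term has coefficient $0$ when $m=1$); $c_{n,n}$ is the number of compacted binary trees of size $n$. Define $e_{n,m}=c_{(n+m)/2,(n-m)/2}/((n+m)/2)!$ for integers $n\ge m\ge0$ with $n-m$ even, and $e_{n,m}=0$ if $n-m$ is odd, if $m>n$, or if $m<0$. Define $d_{n,m}$ for $n\ge0$, $m\ge-1$ by $d_{0,0}=1$, $d_{0,m}=0$ ($m>0$), $d_{n,-1}=0$ ($n\ge0$), and $d_{n,m}=\frac{n-m+2}{n+m}d_{n-1,m-1}+d_{n-1,m+1}$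 for $n>0$, $m\ge0$ (equivalently, $d_{n,m}$ is the total weight of lattice paths from $(0,0)$ to $(n,m)$ with steps $(1,1),(1,-1)$ never below $y=0$, where an up step from $(a,b)$ has weight $(a-b+2)/(a+b+2)$). *)

(* Defs.v *)
From mathcomp Require Import all_boot all_order all_algebra.
Set Implicit Arguments. Unset Strict Implicit. Unset Printing Implicit Defensive.
Import Order.TTheory GRing.Theory Num.Theory.
Local Open Scope ring_scope.

(* c_{n,m}: c_{n,0}=1, c_{n,m}=0 (n<m),
   c_{n,m} = c_{n,m-1} + (m+1) c_{n-1,m} - (m-1) c_{n-2,m-1}  (n>=m>=1),
   the last term being 0 when m = 1 (in particular when n = 1). *)
Fixpoint cnum (n : nat) : nat -> int :=
  match n with
  | 0%N => fun m => if m is 0%N then 1 else 0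
  | n1.+1 =>
      fix cm (m : nat) : int :=
        match m with
        | 0%N => 1
        | m1.+1 =>
            if (n < m)%N then 0
            else cm m1 + (m1.+2)%:Z * cnum n1 m
                 - (match n1 with 0%N => 0 | n2.+1 => m1%:Z * cnum n2 m1 end)
        end
  end.

Definition enum_ (n m : int) : rat :=
  match n, m with
  | Posz n', Posz m' =>
      if (m' <= n')%N && ~~ odd (n' - m') then
        (cnum ((n' + m')./2) ((n' - m')./2))%:~R / ((n' + m')./2)`!%:R
      else 0
  | _, _ => 0
  end.

Fixpoint dnat (n m : nat) : rat :=
  match n with
  | 0%N => if m is 0%N then 1 else 0
  | n1.+1 =>
      (if m is m1.+1 then
         ((n%:R - m%:R + 2) / (n + m)%:R) * dnat n1 m1
       else 0)
      + dnat n1 m.+1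
  end.

Definition dnum (n m : int) : rat :=
  match n, m with
  | Posz n', Posz m' => dnat n' m'
  | _, _ => 0
  end.

Definition Le (n m : int) : rat :=
  (n - m + 2)%:~R / (n + m)%:~R * enum_ (n - 1) (m - 1)
  + (n - m - 2)%:~R / (n - m)%:~R * enum_ (n - 1) (m + 1)
  + (n - m - 4)%:~R / (n - m - 2)%:~R *
      (2 / (n - m)%:~R * enum_ (n - 2) (m + 2)
       + 2 / (n + m)%:~R * enum_ (n - 3) (m + 1)).

(* U for a generic array f (U_e with f = e, U_d with f = d) *)
Definition Ugen (f : int -> int -> rat) (n m : int) : rat :=
  (n - m + 2)%:~R / (n + m)%:~R * f (n - 1) (m - 1)
  + (n - m - 2)%:~R / (n - m)%:~R * f (n - 1) (m + 1)
  + 2 / (n - m)%:~R * f (n - 2) (m + 2)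
  + 2 / (n + m)%:~R * f (n - 3) (m + 1)
  + 4 / ((n + m) * (n + m - 2))%:~R * f (n - 3) (m - 1).

(* Main.v *)
Require Import Defs.
From mathcomp Require Import all_boot all_order all_algebra.
From mathcomp Require Import zify ring lra.
Import Order.TTheory GRing.Theory Num.Theory.
Local Open Scope ring_scope.

Lemma cnum0 p : cnum p 0 = 1.
Proof. by case: p. Qed.

Lemma cnum_gt p q : (p < q)%N -> cnum p q = 0.
Proof.
case: q => [//|q]; case: p => [//|p] /= h.
by rewrite h.
Qed.

Lemma cnumS P q : (q <= P)%N ->
  cnum P.+1 q.+1 = cnum P.+1 q + (q.+2)%:Z * cnum P q.+1
     - (if P is P'.+1 then q%:Z * cnum P' q else 0).
Proof.
move=> h /=. rewrite ltnS ltnNge h /=. by case: P h.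
Qed.

Definition Row p :=
  [/\ forall q, 0 <= cnum p q,
      forall q, (q < p)%N -> cnum p q <= cnum p q.+1,
      forall q, q%:Z * cnum p.-1 q <= cnum p q.+1
    & forall q, q%:Z * cnum p.-1 q <= cnum p q].

Lemma Row0 : Row 0.
Proof.
split.
- by case.
- by [].
- case=> [|q] /=; lia.
- case=> [|q] /=; lia.
Qed.

Lemma RowS P : Row P -> Row P.+1.
Proof.
case=> N M H G.
have D : forall q, (q <= P)%N ->
   (q.+1)%:Z * cnum P q.+1 <= cnum P.+1 q.+1 - cnum P.+1 q.
  move=> q hq; rewrite cnumS //.
  have := H q; have := N q.+1.
  case: P {M G N H} hq => [|P'] hq /=.
    move=> h1 _; lia.
  lia.
have NS : forall q, 0 <= cnum P.+1 q.
  elim=> [|q IH]; first by rewrite cnum0.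
  case: (leqP q P) => hq.
    have := D q hq; have := N q.+1; lia.
  by rewrite cnum_gt.
have GS : forall q, q%:Z * cnum P q <= cnum P.+1 q.
  case=> [|q]; first by rewrite mul0r cnum0.
  case: (leqP q P) => hq.
    have := D q hq; have := NS q; lia.
  rewrite (@cnum_gt P q.+1) ?mulr0 //; lia.
split => //.
- move=> q hq; have := D q hq; have := N q.+1; lia.
- move=> q; change (P.+1.-1) with P; case: (ltnP P q) => hq.
    rewrite (@cnum_gt P q) //; have := NS q.+1; lia.
  have := D q; rewrite leq_eqVlt in hq; case/orP: hq => hq.
    move/eqP: hq => -> /(_ (leqnn _)).
    rewrite (@cnum_gt P P.+1 (ltnSn P)) mulr0.
    have := GS P; lia.
  move=> /(_ (ltnW hq)).
  have := M q hq; have := N q; have := NS q; have := N q.+1; nia.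
Qed.

Lemma rowP p : Row p.
Proof. elim: p => [|p IH]; [exact: Row0 | exact: RowS]. Qed.

Lemma cnum_ge0 p q : 0 <= cnum p q.
Proof. by case: (rowP p). Qed.
Lemma cnumH p q : q%:Z * cnum p q <= cnum p.+1 q.+1.
Proof. by case: (rowP p.+1). Qed.
Lemma cnumG p q : q%:Z * cnum p q <= cnum p.+1 q.
Proof. by case: (rowP p.+1). Qed.


Definition E k j : rat := (cnum k j)%:~R / (k`!)%:R.

Lemma enumE k j N M : N = (k + j)%N%:Z -> M = k%:Z - j%:Z -> enum_ N M = E k j.
Proof.
move=> -> ->; case: (leqP j k) => h.
  rewrite (subzn h) /enum_.
  have -> : (k - j <= k + j)%N by apply: leq_trans (leq_subr j k) (leq_addr j k).
  have e1 : (k + j + (k - j) = k + k)%N by rewrite -addnA subnKC.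
  have e2 : (k + j - (k - j) = j + j)%N by rewrite subnBA // -addnA addKn.
  by rewrite e1 e2 !addnn odd_double !doubleK.
have -> : k%:Z - j%:Z = Negz (j - k).-1 by rewrite NegzE; lia.
by rewrite /E cnum_gt // mul0r.
Qed.

Lemma E_ge0 k j : 0 <= E k j.
Proof. by rewrite /E divr_ge0 // ?ler0z ?cnum_ge0. Qed.

Lemma enum_ge0 N M : 0 <= enum_ N M.
Proof.
case: N => [N|N]; case: M => [M|M] //=.
case: ifP => // _. exact: (E_ge0 _ _).
Qed.

Lemma enum_gt N M : N < M -> enum_ N M = 0.
Proof.
case: N => [N|N]; case: M => [M|M] //= h.
by rewrite ltz_nat in h; rewrite leqNgt h.
Qed.

Lemma enum_odd (N M : nat) : odd (N - M) -> enum_ N M = 0.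
Proof. by move=> h /=; rewrite h andbF. Qed.


Lemma dnatS n m : dnat n.+1 m =
  (if m is m1.+1 then ((n.+1%:R - m%:R + 2) / (n.+1 + m)%:R) * dnat n m1 else 0)
  + dnat n m.+1.
Proof. by []. Qed.

Lemma dnat_gt n m : (n < m)%N -> dnat n m = 0.
Proof.
elim: n m => [|n IH] [|m] //= h.
rewrite !IH ?mulr0 ?addr0 //; lia.
Qed.

Arguments dnat_gt {n m}.

Lemma dnat_ge0 n m : 0 <= dnat n m.
Proof.
elim: n m => [|n IH] [|m]; rewrite ?dnatS /=; first by [].
- by case: m.
- by rewrite add0r IH.
apply: addr_ge0 (IH _).
case: (ltnP n m) => h; first by rewrite (dnat_gt h) mulr0.
apply: mulr_ge0 (IH _); apply: divr_ge0 => //.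
have : (m.+1%:R <= n.+1%:R :> rat) by rewrite ler_nat.
lra.
Qed.

Lemma dnat_diag n : dnat n n = 1 / (n`!)%:R.
Proof.
elim: n => [|n IH]; first by rewrite /= divr1.
rewrite dnatS (@dnat_gt n n.+2 (leqW (ltnSn n))) addr0 IH factS natrM.
have h1 : (n.+1%:R : rat) != 0 by rewrite pnatr_eq0.
have h2 : (n`!%:R : rat) != 0 by rewrite pnatr_eq0 -lt0n fact_gt0.
rewrite subrr add0r natrD.
have h3 : (0 <= n%:R :> rat) by [].
have h4 : (0 < n`!%:R :> rat) by rewrite ltr0n fact_gt0.
field. rewrite h2 /=; apply/andP; split; lra.
Qed.

Lemma intrPz (n : nat) : ((Posz n)%:~R : rat) = n%:R. Proof. by []. Qed.

Lemma ge0E (X Y : rat) : X = Y -> 0 <= Y -> 0 <= X.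
Proof. by move=> ->. Qed.

Ltac sidec := rewrite ?andbT; repeat (apply/andP; split); lra.

Lemma Ud_le_d (n m : nat) : (3 <= n)%N -> (m < n)%N -> Ugen dnum n m <= dnum n m.
Proof.
case: n => [|[|[|N]]] // _ hm.
rewrite /Ugen !(intrD, intrB, intrM, intrN, intrPz).
have -> : (N.+3%:Z - 1) = N.+2 by lia.
have -> : (N.+3%:Z - 2) = N.+1 by lia.
have -> : (N.+3%:Z - 3) = N by lia.
have hN : (0 <= N%:R :> rat) by [].
case: m hm => [|m1] hm.
  have -> : (0%:Z - 1) = Negz 0 by [].
  have -> : (0%:Z + 1) = 1%N by [].
  have -> : (0%:Z + 2) = 2%N by [].
  rewrite /dnum [dnat N.+3 _]dnatS [dnat N.+2 1]dnatS [dnat N.+1 0]dnatS !natrD.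
  rewrite -subr_ge0.
  apply: (@ge0E _ 0) => //.
  field; sidec.
have -> : (m1.+1%:Z - 1) = m1 by lia.
have -> : (m1.+1%:Z + 1) = m1.+2 by lia.
have -> : (m1.+1%:Z + 2) = m1.+3 by lia.
have hm' : (m1%:R <= N%:R + 1 :> rat) by rewrite natr1 ler_nat; lia.
have hm0 : (0 <= m1%:R :> rat) by [].
rewrite /dnum [dnat N.+3 _]dnatS [dnat N.+2 m1.+2]dnatS [dnat N.+1 m1.+1]dnatS !natrD.
rewrite -subr_ge0.
apply: (@ge0E _ (2 * (N%:R - m1%:R) / ((N%:R + m1%:R + 4) * (N%:R + m1%:R + 2)) * dnat N m1)).
  field; sidec.
case: (leqP m1 N) => h; last by rewrite (dnat_gt h) mulr0.
have h' : (m1%:R <= N%:R :> rat) by rewrite ler_nat.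
apply: mulr_ge0 (dnat_ge0 _ _); apply: divr_ge0; [lra | apply: mulr_ge0; lra].
Qed.


Lemma cnumSS P q : (q <= P.+1)%N ->
  cnum P.+2 q.+1 = cnum P.+2 q + (q.+2)%:Z * cnum P.+1 q.+1 - q%:Z * cnum P q.
Proof. move=> h; by rewrite cnumS. Qed.

Ltac pos := first [ lra | apply: divr_ge0; pos | apply: mulr_ge0; pos | apply: addr_ge0; pos ].

Lemma evenJ (m J : nat) (n := (m + J.+2 + J.+2)%N) :
  Le n m <= enum_ n m /\ enum_ n m <= Ugen enum_ n m.
Proof.
rewrite /Le /Ugen /n.
pose K := (m + J)%N.
rewrite [enum_ (Posz _) (Posz _)](@enumE K.+2 J.+2); try (rewrite /K; lia).
rewrite [enum_ (_ - 1) (_ - 1)](@enumE K.+1 J.+2); try (rewrite /K; lia).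
rewrite [enum_ (_ - 1) (_ + 1)](@enumE K.+2 J.+1); try (rewrite /K; lia).
rewrite [enum_ (_ - 2) (_ + 2)](@enumE K.+2 J); try (rewrite /K; lia).
rewrite [enum_ (_ - 3) (_ + 1)](@enumE K.+1 J); try (rewrite /K; lia).
rewrite [enum_ (_ - 3) (_ - 1)](@enumE K J.+1); try (rewrite /K; lia).
rewrite /E !factS !natrM.
rewrite (@cnumSS K J.+1); last (rewrite /K; lia).
rewrite (@cnumSS K J); last (rewrite /K; lia).
rewrite (@cnumS K J); last (rewrite /K; lia).
have ht8 : 0 <= (if K is K'.+1 then J%:Z * cnum K' J else 0) <= cnum K J.+1.
  case: (K) => [|K']; apply/andP; split; rewrite ?lexx //;
    try exact: cnum_ge0; try exact: cnumH.
  have := cnum_ge0 K' J; nia.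
move: ht8; set t8 := (if K is K'.+1 then _ else _) => ht8.
rewrite !(intrD, intrB, intrM, intrN, intrPz).
have hf : (0 < K`!%:R :> rat) by rewrite ltr0n fact_gt0.
have hJ : (0 <= J%:R :> rat) by [].
have hm : (0 <= m%:R :> rat) by [].
have hK : (K%:R = m%:R + J%:R :> rat) by rewrite /K natrD.
have h5 : (t8%:~R <= (cnum K J.+1)%:~R :> rat) by rewrite ler_int; case/andP: ht8.
have h8 : (0 <= t8%:~R :> rat) by rewrite ler0z; case/andP: ht8.
have h47 : (J%:R * (cnum K J)%:~R <= (cnum K.+1 J)%:~R :> rat).
  by rewrite -intrPz -intrM ler_int cnumG.
have h3 : (0 <= (cnum K.+2 J)%:~R :> rat) by rewrite ler0z cnum_ge0.
have h7 : (0 <= (cnum K J)%:~R :> rat) by rewrite ler0z cnum_ge0.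
move: h5 h8 h47 h3 h7 hf.
set c3 := (cnum K.+2 J)%:~R. set c4 := (cnum K.+1 J)%:~R.
set c5 := (cnum K J.+1)%:~R. set c7 := (cnum K J)%:~R.
set c1 := (cnum K.+1 J.+2)%:~R. set t := t8%:~R. set f := K`!%:R.
move=> h5 h8 h47 h3 h7 hf.
clearbody c3 c4 c5 c7 c1 t f. clear ht8 hK.
have hmJ : (0 <= (m + J)%:R :> rat) by [].
have hf' : 0 <= f by lra.
rewrite /K.
split; rewrite -subr_ge0.
  apply: (@ge0E _ ((c3 / ((J%:R + 2) * (J%:R + 1)) + (c4 - J%:R * c7) / (J%:R + 1)
     + J%:R * c7 / ((J%:R + 1) * (J%:R + 2)) + (c5 - t)) /
     (((m + J)%:R + 2) * ((m + J)%:R + 1) * f))).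
    by field; sidec.
  pos.
apply: (@ge0E _ ((t + J%:R * c7 / (J%:R + 2)) /
     (((m + J)%:R + 2) * ((m + J)%:R + 1) * f))).
  by field; sidec.
pos.
Qed.

Lemma evenOne (M : nat) :
  Le M.+3 M.+1 <= enum_ M.+3 M.+1 /\ enum_ M.+3 M.+1 <= Ugen enum_ M.+3 M.+1.
Proof.
rewrite /Le /Ugen.
rewrite [enum_ (Posz _) (Posz _)](@enumE M.+2 1); try lia.
rewrite [enum_ (_ - 1) (_ - 1)](@enumE M.+1 1); try lia.
rewrite [enum_ (_ - 1) (_ + 1)](@enumE M.+2 0); try lia.
rewrite [enum_ (_ - 2) (_ + 2)]enum_gt; last lia.
rewrite [enum_ (_ - 3) (_ + 1)]enum_gt; last lia.
rewrite [enum_ (_ - 3) (_ - 1)](@enumE M 0); try lia.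
rewrite /E !factS !natrM (@cnumSS M 0) // !cnum0.
rewrite !(intrD, intrB, intrM, intrN, intrPz).
have hf : (0 < M`!%:R :> rat) by rewrite ltr0n fact_gt0.
have h1 : (0 <= (cnum M.+1 1)%:~R :> rat) by rewrite ler0z cnum_ge0.
move: hf h1.
set c1 := (cnum M.+1 1)%:~R. set f := M`!%:R.
move=> hf h1; clearbody c1 f.
have hM : (0 <= M%:R :> rat) by [].
rewrite !mulr0 !addr0.
split; rewrite -subr_ge0.
  apply: (@ge0E _ (1 / ((M%:R + 2) * (M%:R + 1) * f))).
    by field; sidec.
  pos.
apply: (@ge0E _ 0) => //.
by field; sidec.
Qed.


Lemma enum_oddZ (N M : int) : ((N - M) %% 2)%Z = 1 -> enum_ N M = 0.
Proof.
case: N => [N|N]; case: M => [M|M] //= h.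
case: ifP => // /andP [h1 h2]; exfalso.
lia.
Qed.

Lemma partsAB (n m : nat) : (3 <= n)%N -> (m < n)%N ->
  Le n m <= enum_ n m /\ enum_ n m <= Ugen enum_ n m.
Proof.
move=> hn hm.
case: (boolP (odd (n - m))) => ho.
  rewrite /Le /Ugen !enum_oddZ; try lia.
  by rewrite !mulr0 !addr0.
have hj : n = (m + (n - m)./2 + (n - m)./2)%N.
  have := odd_double_half (n - m); rewrite (negbTE ho) add0n -addnn; lia.
move: hj; case: ((n - m)./2) => [|[|J]] hj.
- lia.
- have [M hM] : exists M, m = M.+1 by case: (m) hj hn => [|M]; [lia | exists M].
  subst m; rewrite hj addn1 addn1; exact: evenOne.
- rewrite hj; exact: evenJ.
Qed.

Lemma dnum_gt (N M : int) : 0 <= N -> N < M -> dnum N M = 0.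
Proof.
case: N => [N|N]; case: M => [M|M] //= _ h.
by rewrite dnat_gt //; rewrite ltz_nat in h.
Qed.

Lemma Ue_le_Ud (n m : nat) :
  (forall N M : nat, (N < n)%N -> enum_ N M <= dnat N M) ->
  (3 <= n)%N -> (m < n)%N -> Ugen enum_ n m <= Ugen dnum n m.
Proof.
move=> IH hn hm.
have IHZ : forall N M : int, N < n%:Z -> enum_ N M <= dnum N M.
  case=> [N|N]; case=> [M|M] //= h; apply: IH; by rewrite ltz_nat in h.
have hnr : (3 <= n%:R :> rat) by rewrite (ler_nat rat 3).
have hmr : (m%:R + 1 <= n%:R :> rat) by rewrite natr1 ler_nat.
have hm0 : (0 <= m%:R :> rat) by [].
rewrite /Ugen.
have T : forall (c : rat) N M, 0 <= c -> N < n%:Z -> c * enum_ N M <= c * dnum N M.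
  by move=> c N M hc hN; apply: ler_wpM2l => //; apply: IHZ.
repeat apply: lerD.
- apply: T; last lia. rewrite !(intrD, intrB, intrM, intrN, intrPz). pos.
- case: (eqVneq (n - m)%N 1) => h1.
    rewrite enum_gt ?dnum_gt //; lia.
  apply: T; last lia.
  have hmr' : (m%:R + 2 <= n%:R :> rat).
    have -> : (2 : rat) = 1 + 1 by []. rewrite addrA !natr1 ler_nat; lia.
  rewrite !(intrD, intrB, intrM, intrN, intrPz). pos.
- apply: T; last lia. pos.
- apply: T; last lia. rewrite !(intrD, intrB, intrM, intrN, intrPz). pos.
- apply: T; last lia. rewrite !(intrD, intrB, intrM, intrN, intrPz). pos.
Qed.

Lemma e_le_d (N : nat) : forall M : nat, enum_ N M <= dnat N M.
Proof.
elim/ltn_ind: N => N IH M.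
case: (ltngtP N M) => h.
- rewrite enum_gt ?dnat_ge0 //; by rewrite ltz_nat.
- case: (boolP (odd (N - M))) => ho.
    by rewrite enum_odd // dnat_ge0.
  case: (leqP 3 N) => h3.
    have [_ h1] := @partsAB N M h3 h.
    apply: le_trans h1 _.
    apply: le_trans (@Ue_le_Ud N M (fun a b hab => IH a hab b) h3 h) _.
    exact: Ud_le_d.
  have [-> ->] : N = 2%N /\ M = 0%N by lia.
  rewrite (@enumE 1 1) // /E [dnat 2 0]dnatS [dnat 1 1]dnatS.
- subst M. rewrite (@enumE N 0); try lia.
  by rewrite dnat_diag /E cnum0.
Qed.

Theorem lemma5p1 (n m : nat) :
  (3 <= n)%N -> (m < n)%N ->
  [/\ Le n m <= enum_ n m,
      enum_ n m <= Ugen enum_ n m,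
      Ugen enum_ n m <= Ugen dnum n m
    & Ugen dnum n m <= dnum n m].
Proof.
move=> hn hm; have [h1 h2] := @partsAB n m hn hm.
split => //.
- by apply: Ue_le_Ud => // N M _; exact: e_le_d.
- exact: Ud_le_d.
Qed.
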